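(* Let $R$ be a partial algebra over an algebraically closed field $k$ in which every element is algebraic over $k$ (e.g. a finite-dimensional $k$-algebra with its standard partial algebra structure). Then a morphism of partial $k$-algebras $R\to k$ is uniquely determined by its restriction to the set of idempotents of $R$ (elements $e$ with $e\cdot e=e$).
   Context: A partial $k$-algebra is a set $R$ with a reflexive symmetric relation $\perp$ (commeasurability), partial operations $+,\cdot$ defined on pairs $a\perp b$, scalar multiplication $k\times R\to R$, and elements $0,1$ such that: every $a$ is commeasurable with $0$ and $1$; if $a_1,a_2,a_3$ are pairwise commeasurable and $\lambda\in k$ then $a_1+a_2$, $a_1a_2$, $\lambda a_1$ are commeasurable with $a_3$ (resp. $a_2$); for pairwise commeasurable $a_1,a_2,a_3$ the values of all commutative polynomials in them form a commutative $k$-algebra. A full $k$-algebra has the standard partial structure with $a\perp b$ iff $ab=ba$. An element $a$ is algebraic if $k[a]$ (values of polynomials in $a$) is finite-dimensional over $k$. A morphism $f\colon R\to k$ satisfies, for $a\perp b$, $\lambda\in k$: $f(\lambda a)=\lambda f(a)$, $f(a+b)=f(a)+f(b)$, $f(ab)=f(a)f(b)$, $f(0)=0$, $f(1)=1$. *)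

(* Defs.v *)
From HB Require Import structures.
From mathcomp Require Import all_boot all_algebra.
Set Implicit Arguments. Unset Strict Implicit. Unset Printing Implicit Defensive.
Import GRing.Theory.
Local Open Scope ring_scope.

(* Partial operations are modelled as total functions whose values are only
   ever used (in the axioms and in the notion of morphism) on commeasurable
   pairs; values on non-commeasurable pairs are irrelevant junk. *)

Inductive pterm (k : Type) (n : nat) : Type :=
  | PVar of 'I_n
  | PZero
  | POne
  | PAdd of pterm k n & pterm k n
  | PMul of pterm k n & pterm k n
  | PScale of k & pterm k n.

Record PartialAlg (k : fieldType) := {
  pcarrier :> Type;
  pcomm : pcarrier -> pcarrier -> Prop;
  padd : pcarrier -> pcarrier -> pcarrier;
  pmul : pcarrier -> pcarrier -> pcarrier;
  pscale : k -> pcarrier -> pcarrier;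
  pzero : pcarrier;
  pone : pcarrier;
  pcomm_refl : forall a, pcomm a a;
  pcomm_sym : forall a b, pcomm a b -> pcomm b a;
  pcomm0 : forall a, pcomm a pzero;
  pcomm1 : forall a, pcomm a pone;
  pcomm_closed : forall (a1 a2 a3 : pcarrier) (l : k),
    pcomm a1 a2 -> pcomm a1 a3 -> pcomm a2 a3 ->
    [/\ pcomm (padd a1 a2) a3, pcomm (pmul a1 a2) a3 & pcomm (pscale l a1) a2];
  (* for pairwise commeasurable a1 a2 a3, the values of all polynomials in
     them form a commutative k-algebra (see pcomm_poly_alg below) *)
  pcomm_poly : forall (env : 'I_3 -> pcarrier),
    (forall i j, pcomm (env i) (env j)) ->
    let ev := fix ev (t : pterm k 3) : pcarrier :=
      match t with
      | PVar i => env i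
      | PZero => pzero
      | POne => pone
      | PAdd t1 t2 => padd (ev t1) (ev t2)
      | PMul t1 t2 => pmul (ev t1) (ev t2)
      | PScale c t1 => pscale c (ev t1)
      end in
    let S x := exists t, ev t = x in
    (* the value set is pairwise commeasurable (so operations are defined) *)
    (forall x y, S x -> S y -> pcomm x y) /\
    (forall x y z, S x -> S y -> S z ->
      [/\ padd (padd x y) z = padd x (padd y z),
          padd x y = padd y x,
          padd pzero x = x &
          padd x (pscale (-1) x) = pzero] /\
      [/\ pmul (pmul x y) z = pmul x (pmul y z),
          pmul x y = pmul y x,
          pmul pone x = x &
          pmul x (padd y z) = padd (pmul x y) (pmul x z)]) /\
    (forall (l m : k) x y, S x -> S y ->
      [/\ pscale l (padd x y) = padd (pscale l x) (pscale l y),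
          pscale (l + m) x = padd (pscale l x) (pscale m x),
          pscale (l * m) x = pscale l (pscale m x),
          pscale 1 x = x &
          pscale l (pmul x y) = pmul (pscale l x) y])
}.

Section Defs.
Variables (k : fieldType) (R : PartialAlg k).

Fixpoint peval1 (a : R) (t : pterm k 1) : R :=
  match t with
  | PVar _ => a
  | PZero => pzero R
  | POne => pone R
  | PAdd t1 t2 => padd (peval1 a t1) (peval1 a t2)
  | PMul t1 t2 => pmul (peval1 a t1) (peval1 a t2)
  | PScale c t1 => pscale c (peval1 a t1)
  end.

Definition kpoly (a : R) (x : R) : Prop := exists t, peval1 a t = x.

Definition lincomb (s : seq (k * R)) : R :=
  foldr (fun p acc => padd (pscale p.1 p.2) acc) (pzero R) s.

(* a is algebraic: k[a] is finite-dimensional over k, i.e. spanned by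
   finitely many of its elements *)
Definition algebraic (a : R) : Prop :=
  exists vs : seq R, (forall i, (i < size vs)%N -> kpoly a (nth (pzero R) vs i)) /\
    forall x, kpoly a x -> exists cs : seq k,
      size cs = size vs /\ x = lincomb (zip cs vs).

Definition pidempotent (e : R) : Prop := pmul e e = e.

Definition is_morphism (f : R -> k) : Prop :=
  [/\ forall l a, f (pscale l a) = l * f a,
      forall a b, pcomm a b -> f (padd a b) = f a + f b,
      forall a b, pcomm a b -> f (pmul a b) = f a * f b,
      f (pzero R) = 0 & f (pone R) = 1].

End Defs.

(* Main.v *)
From HB Require Import structures.
Require Import Defs.
From mathcomp Require Import all_boot all_algebra.
From mathcomp Require Import boolp ring.
Set Implicit Arguments. Unset Strict Implicit. Unset Printing Implicit Defensive.
Import GRing.Theory.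
Local Open Scope ring_scope.

Section Sub.
Variables (k : fieldType) (R : PartialAlg k) (a : R).
Hypothesis H10 : pone R <> pzero R.

Fixpoint ev3 (t : pterm k 3) : R :=
  match t with
  | PVar _ => a
  | PZero => pzero R
  | POne => pone R
  | PAdd t1 t2 => padd (ev3 t1) (ev3 t2)
  | PMul t1 t2 => pmul (ev3 t1) (ev3 t2)
  | PScale c t1 => pscale c (ev3 t1)
  end.

Definition S3 x := exists t, ev3 t = x.

Lemma axs :
    (forall x y, S3 x -> S3 y -> pcomm x y) /\
    (forall x y z, S3 x -> S3 y -> S3 z ->
      [/\ padd (padd x y) z = padd x (padd y z),
          padd x y = padd y x,
          padd (pzero R) x = x &
          padd x (pscale (-1) x) = pzero R] /\
      [/\ pmul (pmul x y) z = pmul x (pmul y z),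
          pmul x y = pmul y x,
          pmul (pone R) x = x &
          pmul x (padd y z) = padd (pmul x y) (pmul x z)]) /\
    (forall (l m : k) x y, S3 x -> S3 y ->
      [/\ pscale l (padd x y) = padd (pscale l x) (pscale l y),
          pscale (l + m) x = padd (pscale l x) (pscale m x),
          pscale (l * m) x = pscale l (pscale m x),
          pscale 1 x = x &
          pscale l (pmul x y) = pmul (pscale l x) y]).
Proof. exact (@pcomm_poly k R (fun _ => a) (fun i j => @pcomm_refl k R a)). Qed.

Lemma S_add x y : S3 x -> S3 y -> S3 (padd x y).
Proof. by case=> t <- [u <-]; exists (PAdd t u). Qed.
Lemma S_mul x y : S3 x -> S3 y -> S3 (pmul x y).
Proof. by case=> t <- [u <-]; exists (PMul t u). Qed.
Lemma S_scale c x : S3 x -> S3 (pscale c x).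
Proof. by case=> t <-; exists (PScale c t). Qed.
Lemma S_0 : S3 (pzero R). Proof. by exists (PZero _ _). Qed.
Lemma S_1 : S3 (pone R). Proof. by exists (POne _ _). Qed.
Lemma S_a : S3 a. Proof. by exists (PVar _ ord0). Qed.

Definition K := {x : R | S3 x}.
HB.instance Definition _ := gen_eqMixin K.
HB.instance Definition _ := gen_choiceMixin K.

Lemma Kinj (x y : K) : proj1_sig x = proj1_sig y -> x = y.
Proof.
case: x => x px; case: y => y py /= e; subst.
by rewrite (Prop_irrelevance px py).
Qed.

Definition Kadd (x y : K) : K := exist _ _ (S_add (proj2_sig x) (proj2_sig y)).
Definition Kmul (x y : K) : K := exist _ _ (S_mul (proj2_sig x) (proj2_sig y)).
Definition Kscale c (x : K) : K := exist _ _ (S_scale c (proj2_sig x)).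
Definition Kopp (x : K) : K := Kscale (-1) x.
Definition K0 : K := exist _ _ S_0.
Definition K1 : K := exist _ _ S_1.
Definition Ka : K := exist _ _ S_a.

Let P (x : K) := proj2_sig x.

Lemma KaddA : associative Kadd.
Proof. by move=> x y z; apply: Kinj; case: (proj1 (proj2 axs) _ _ _ (P x) (P y) (P z)) => -[]. Qed.
Lemma KaddC : commutative Kadd.
Proof. by move=> x y; apply: Kinj; case: (proj1 (proj2 axs) _ _ _ (P x) (P y) (P x)) => -[]. Qed.
Lemma Kadd0 : left_id K0 Kadd.
Proof. by move=> x; apply: Kinj; case: (proj1 (proj2 axs) _ _ _ (P x) (P x) (P x)) => -[]. Qed.
Lemma KaddN : left_inverse K0 Kopp Kadd.
Proof. move=> x; rewrite KaddC; apply: Kinj; case: (proj1 (proj2 axs) _ _ _ (P x) (P x) (P x)) => -[]; done. Qed.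

HB.instance Definition _ := GRing.isZmodule.Build K KaddA KaddC Kadd0 KaddN.

Lemma KmulA : associative Kmul.
Proof. by move=> x y z; apply: Kinj; case: (proj1 (proj2 axs) _ _ _ (P x) (P y) (P z)) => _ []. Qed.
Lemma KmulC : commutative Kmul.
Proof. by move=> x y; apply: Kinj; case: (proj1 (proj2 axs) _ _ _ (P x) (P y) (P x)) => _ []. Qed.
Lemma Kmul1 : left_id K1 Kmul.
Proof. by move=> x; apply: Kinj; case: (proj1 (proj2 axs) _ _ _ (P x) (P x) (P x)) => _ []. Qed.
Lemma KmulDl : left_distributive Kmul Kadd.
Proof.
move=> x y z; rewrite KmulC (KmulC x) (KmulC y); apply: Kinj.
by case: (proj1 (proj2 axs) _ _ _ (P z) (P x) (P y)) => _ [].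
Qed.
Lemma K10 : K1 != K0.
Proof. by apply/eqP => /(congr1 (@proj1_sig _ _)). Qed.

HB.instance Definition _ := GRing.Zmodule_isComNzRing.Build K KmulA KmulC Kmul1 KmulDl K10.

Lemma KscaleA c d (v : K) : Kscale c (Kscale d v) = Kscale (c * d) v.
Proof. by apply: Kinj; case: (proj2 (proj2 axs) c d _ _ (P v) (P v)). Qed.
Lemma Kscale1 : left_id 1 Kscale.
Proof. by move=> v; apply: Kinj; case: (proj2 (proj2 axs) 1 1 _ _ (P v) (P v)). Qed.
Lemma KscaleDr : right_distributive Kscale Kadd.
Proof. by move=> c x y; apply: Kinj; case: (proj2 (proj2 axs) c c _ _ (P x) (P y)). Qed.
Lemma KscaleDl (v : K) : {morph Kscale^~ v : c d / c + d >-> Kadd c d}.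
Proof. by move=> c d; apply: Kinj; case: (proj2 (proj2 axs) c d _ _ (P v) (P v)). Qed.

HB.instance Definition _ := GRing.Zmodule_isLmodule.Build k K KscaleA Kscale1 KscaleDr KscaleDl.

Lemma KscaleAl c (u v : K) : Kscale c (Kmul u v) = Kmul (Kscale c u) v.
Proof. by apply: Kinj; case: (proj2 (proj2 axs) c c _ _ (P u) (P v)). Qed.

HB.instance Definition _ := GRing.Lmodule_isLalgebra.Build k K KscaleAl.
HB.instance Definition _ := GRing.Lalgebra_isComAlgebra.Build k K.


Definition W (r : R) : K :=
  match pselect (S3 r) with left h => exist _ r h | right _ => 0 end.
Lemma WE r : S3 r -> proj1_sig (W r) = r.
Proof. by rewrite /W; case: pselect. Qed.

Fixpoint tconv (t : pterm k 1) : pterm k 3 :=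
  match t with
  | PVar _ => PVar _ ord0
  | PZero => PZero _ _
  | POne => POne _ _
  | PAdd t1 t2 => PAdd (tconv t1) (tconv t2)
  | PMul t1 t2 => PMul (tconv t1) (tconv t2)
  | PScale c t1 => PScale c (tconv t1)
  end.
Lemma tconvE t : ev3 (tconv t) = peval1 a t.
Proof. by elim: t => //= [t1 -> t2 ->|t1 -> t2 ->|c t ->]. Qed.
Lemma kpolyS r : kpoly a r -> S3 r.
Proof. by case=> t <-; exists (tconv t); rewrite tconvE. Qed.

Lemma kpoly_pow i : kpoly a (proj1_sig (Ka ^+ i)).
Proof.
elim: i => [|i [t Ht]]; first by exists (POne _ _).
by exists (PMul (PVar _ ord0) t); rewrite exprS /= Ht.
Qed.

Lemma lincombE (vs : seq R) (cs : seq k) :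
  (forall i, (i < size vs)%N -> S3 (nth (pzero R) vs i)) -> size cs = size vs ->
  lincomb (zip cs vs) =
  proj1_sig (\sum_(j < size vs) nth 0 cs j *: W (nth (pzero R) vs j)).
Proof.
elim: vs cs => [|v vs IH] [|c cs] //= hS; first by rewrite big_ord0.
case=> hs; rewrite big_ord_recl /=.
rewrite WE; last exact: (hS 0%N).
by rewrite IH // => i hi; apply: (hS i.+1).
Qed.

Lemma horner_alg_sum n (d : nat -> k) :
  horner_alg Ka (\poly_(i < n) d i) = \sum_(i < n) d i *: Ka ^+ i.
Proof.
rewrite poly_def rmorph_sum; apply: eq_bigr => i _.
by rewrite -mul_polyC rmorphM /= horner_algC rmorphXn /= horner_algX -scalerAl mul1r.
Qed.

Lemma dep : algebraic a -> exists p : {poly k}, p != 0 /\ horner_alg Ka p = 0.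
Proof.
case=> vs [hvs hspan].
have hS : forall i, (i < size vs)%N -> S3 (nth (pzero R) vs i).
  by move=> i hi; apply: kpolyS; apply: hvs.
set n := size vs.
have : forall i : 'I_n.+1, exists cs : seq k,
    size cs = n /\ proj1_sig (Ka ^+ i) = lincomb (zip cs vs).
  by move=> i; apply: hspan; apply: kpoly_pow.
case/choice => cs hcs.
pose M : 'M[k]_(n.+1, n) := \matrix_(i, j) nth 0 (cs i) j.
have : kermx M != 0.
  rewrite kermx_eq0 /row_free; apply/negP => /eqP h.
  by have := rank_leq_col M; rewrite h ltnn.
case/rowV0Pn => d /sub_kermxP dM dn0.
exists (\poly_(i < n.+1) d 0 (inord i)); split.
  apply: contra dn0 => /eqP h; apply/eqP/rowP => j; rewrite mxE.
  by have := congr1 (fun p : {poly k} => p`_j) h; rewrite coef_poly ltn_ord coef0 inord_val.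
rewrite horner_alg_sum.
under eq_bigr => i _ do rewrite inord_val.
have e : forall i : 'I_n.+1, Ka ^+ i = \sum_(j < n) M i j *: W (nth (pzero R) vs j).
  move=> i; apply: Kinj; case: (hcs i) => hs ->; rewrite lincombE //.
  by congr (proj1_sig _); apply: eq_bigr => j _; rewrite mxE.
under eq_bigr => i _ do rewrite (e i) scaler_sumr.
rewrite exchange_big /=; apply: big1 => j _.
under eq_bigr => i _ do rewrite scalerA.
rewrite -scaler_suml.
have := congr1 (fun m : 'M[k]_(1, n) => m 0 j) dM; rewrite !mxE => ->.
by rewrite scale0r.
Qed.

Lemma valD (u v : K) : proj1_sig (u + v) = padd (proj1_sig u) (proj1_sig v). Proof. by []. Qed.
Lemma valM (u v : K) : proj1_sig (u * v) = pmul (proj1_sig u) (proj1_sig v). Proof. by []. Qed.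
Lemma valZ c (u : K) : proj1_sig (c *: u) = pscale c (proj1_sig u). Proof. by []. Qed.
Lemma val1 : proj1_sig (1 : K) = pone R. Proof. by []. Qed.
Lemma val0 : proj1_sig (0 : K) = pzero R. Proof. by []. Qed.

Lemma fK_horner (f : R -> k) : is_morphism f ->
  forall q, f (proj1_sig (horner_alg Ka q)) = q.[f a].
Proof.
case=> fs fa fm f0 f1.
have cm (u v : K) : pcomm (proj1_sig u) (proj1_sig v) by apply: (proj1 axs); apply: proj2_sig.
elim/poly_ind => [|p c IH]; first by rewrite rmorph0 val0 f0 horner0.
rewrite rmorphD rmorphM /= horner_algX horner_algC.
rewrite fa; last exact: (cm (horner_alg Ka p * Ka) (c%:A)).
rewrite fm; last exact: cm.
by rewrite IH fs f1 mulr1 hornerMXaddC.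
Qed.



Lemma mainlem (Halga : algebraic a)
  (f g : R -> k) (Hf : is_morphism f) (Hg : is_morphism g)
  (Hfg : forall e : R, pidempotent e -> f e = g e) : f a = g a.
Proof.
have [p [pn0 pa]] := dep Halga.
have rf : p.[f a] = 0.
  by rewrite -(fK_horner Hf) pa; case: Hf.
have rg : p.[g a] = 0.
  by rewrite -(fK_horner Hg) pa; case: Hg.
apply/eqP; apply: contraT => hne.
have [m [q qr hp]] := multiplicity_XsubC p (f a).
move: qr; rewrite pn0 /= => qr.
have m0 : (0 < m)%N.
  case: m hp => // hp; move: rf; rewrite hp expr0 mulr1 => /eqP.
  by move/negP: qr; rewrite /root.
have : coprimep q (('X - (f a)%:P) ^+ m).
  by apply: coprimep_expr; rewrite coprimep_XsubC.
case/Bezout_eq1_coprimepP => [[t s]] /= hb.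
pose U := t * q.
pose e := horner_alg (Ka) U.
have hU : U * U = U - (t * s) * p.
  rewrite hp /U; move: hb; set Y := _ ^+ m => hb.
  have -> : t * q - t * s * (q * Y) = t * q * (1 - s * Y) by ring.
  by rewrite -hb; ring.
have ide : e * e = e.
  have hp0 : horner_alg Ka (t * s * p) = 0 by rewrite rmorphM /= pa mulr0.
  by rewrite /e -rmorphM hU rmorphB /= hp0 subr0.
have hfe : f (proj1_sig e) = 1.
  rewrite /e (fK_horner Hf) /U hornerM.
  have := congr1 (fun r : {poly k} => r.[f a]) hb.
  rewrite hornerD !hornerM horner_exp hornerXsubC subrr expr0n eqn0Ngt m0 /= mulr0 addr0 hornerC.
  by [].
have hge : g (proj1_sig e) = 0.
  rewrite /e (fK_horner Hg) /U hornerM.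
  move: rg; rewrite hp hornerM horner_exp hornerXsubC => /eqP.
  have hne2 : (g a == f a) = false by rewrite eq_sym (negbTE hne).
  rewrite mulf_eq0 expf_eq0 subr_eq0 hne2 andbF orbF => /eqP ->.
  by rewrite mulr0.
have := Hfg (proj1_sig e) (congr1 (@proj1_sig _ _) ide).
by rewrite hfe hge => /eqP; rewrite oner_eq0.
Qed.

End Sub.

Theorem lemma3p6 (k : closedFieldType) (R : PartialAlg k)
  (Halg : forall a : R, algebraic a)
  (f g : R -> k) (Hf : is_morphism f) (Hg : is_morphism g)
  (Hfg : forall e : R, pidempotent e -> f e = g e) :
  forall a : R, f a = g a.
Proof.
move=> a.
have H10 : pone R <> pzero R.
  case: Hf => _ _ _ f0 f1 e; move: f1; rewrite e f0 => /eqP.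
  by rewrite eq_sym oner_eq0.
exact: (mainlem H10 (Halg a) Hf Hg Hfg).
Qed.
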